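(* Let $d,a,b$ be positive integers, $r=(d+2b)/d$, $R=(a+d)/d$, and assume $R\ge 3r$. Define, for $t\in\mathbb C\setminus\{\pm1,\pm r\}$, \[ \Phi(t)=d\log|t+r|-d\log|t-r|+(a+d)\bigl(\log|t-1|-\log|t+1|\bigr). \] Then for each $0\le\theta\le\pi/2$ there is a unique $u_\theta>0$ with $\Phi(r+u_\theta e^{i\theta})=0$; moreover $\Phi(r+ue^{i\theta})>0$ for $0<u<u_\theta$ and $\Phi(r+ue^{i\theta})<0$ for $u>u_\theta$. *)

(* Defs.v *)
(* classical reals. Complex numbers are represented by (real, imaginary) parts. *)
From Stdlib Require Import Reals.
Open Scope R_scope.

Definition cmod (x y : R) : R := sqrt (x ^ 2 + y ^ 2).

Definition Phi (d a : nat) (r : R) (x y : R) : R :=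
  INR d * ln (cmod (x + r) y) - INR d * ln (cmod (x - r) y)
  + (INR a + INR d) * (ln (cmod (x - 1) y) - ln (cmod (x + 1) y)).

Definition r_of (d b : nat) : R := (INR d + 2 * INR b) / INR d.
Definition R_of (d a : nat) : R := (INR a + INR d) / INR d.

Definition Phi_ray (d a b : nat) (theta u : R) : R :=
  Phi d a (r_of d b) (r_of d b + u * cos theta) (u * sin theta).

(* Main.v *)
Require Import Defs.
From Stdlib Require Import Reals Ranalysis5 Lra Lia Psatz.
Open Scope R_scope.

Definition Qk (k c u : R) : R := k^2 + 2*k*c*u + u^2.
Definition gg (r c K u : R) : R :=
  ln (Qk (2*r) c u) - 2 * ln u - K * (ln (Qk (r+1) c u) - ln (Qk (r-1) c u)).
Definition gp (r c K u : R) : R :=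
  (2*(2*r)*c + 2*u)/Qk (2*r) c u - 2/u
  - K*((2*(r+1)*c+2*u)/Qk (r+1) c u - (2*(r-1)*c+2*u)/Qk (r-1) c u).
Definition PP (r c K u : R) : R :=
  2*r^2*(r^2-1)^2
  + c*r*(r^2-1)*(9*r^2-1-4*r*K) * u
  + (4*r^2*(1+r^2)+12*r^2*c^2*(r^2-1)-4*r*K*(2*r^2+c^2*(r^2-1))) * u^2
  + c*(K*(1-13*r^2)+2*r-4*r*c^2+10*r^3+4*r^3*c^2) * u^3
  + 2*r*(1+2*c^2)*(r-K) * u^4
  + c*(r-K) * u^5.

Lemma Qk_pos k c u : 0 < k -> 0 <= c -> 0 < u -> 0 < Qk k c u.
Proof. intros Hk Hc Hu; unfold Qk.
  assert (0 <= k*c*u) by (apply Rmult_le_pos; [apply Rmult_le_pos|]; lra).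
  assert (0 < u^2) by (simpl; nra). nra. Qed.

Lemma gp_eq r c K u : 1 < r -> 0 <= c -> 0 < u ->
  gp r c K u = -4 * PP r c K u / (u * Qk (2*r) c u * Qk (r+1) c u * Qk (r-1) c u).
Proof.
  intros. pose proof (Qk_pos (2*r) c u ltac:(lra) H0 H1).
  pose proof (Qk_pos (r+1) c u ltac:(lra) H0 H1).
  pose proof (Qk_pos (r-1) c u ltac:(lra) H0 H1).
  unfold gp, PP. unfold Qk in *. field. repeat split; lra.
Qed.

Lemma dQ k c x : derivable_pt_lim (fun u => Qk k c u) x (2*k*c + 2*x).
Proof.
  pose proof (derivable_pt_lim_plus _ _ x _ _
    (derivable_pt_lim_plus _ _ x _ _ (derivable_pt_lim_const (k^2) x)
       (derivable_pt_lim_scal id (2*k*c) x 1 (derivable_pt_lim_id x)))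
    (derivable_pt_lim_pow x 2)) as H.
  replace (2*k*c + 2*x) with (0 + 2*k*c*1 + INR 2 * x^(Init.Nat.pred 2)) by (simpl; ring).
  exact H.
Qed.

Lemma dlnQ k c x : 0 < Qk k c x ->
  derivable_pt_lim (fun u => ln (Qk k c u)) x ((2*k*c + 2*x) / Qk k c x).
Proof.
  intros H.
  pose proof (derivable_pt_lim_comp _ ln x _ _ (dQ k c x) (derivable_pt_lim_ln _ H)) as H2.
  replace ((2*k*c + 2*x) / Qk k c x) with (/ Qk k c x * (2*k*c + 2*x)) by (field; lra).
  exact H2.
Qed.

Lemma dgg r c K x : 1 < r -> 0 <= c -> 0 < x -> derivable_pt_lim (gg r c K) x (gp r c K x).
Proof.
  intros Hr Hc Hx.
  pose proof (dlnQ (2*r) c x (Qk_pos (2*r) c x ltac:(lra) Hc Hx)) as H1.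
  pose proof (dlnQ (r+1) c x (Qk_pos (r+1) c x ltac:(lra) Hc Hx)) as H2.
  pose proof (dlnQ (r-1) c x (Qk_pos (r-1) c x ltac:(lra) Hc Hx)) as H3.
  pose proof (derivable_pt_lim_scal _ 2 x _ (derivable_pt_lim_ln x Hx)) as H4.
  pose proof (derivable_pt_lim_scal _ K x _ (derivable_pt_lim_minus _ _ x _ _ H2 H3)) as H5.
  pose proof (derivable_pt_lim_minus _ _ x _ _ (derivable_pt_lim_minus _ _ x _ _ H1 H4) H5) as H6.
  unfold gp. replace (2/x) with (2 * / x) by (unfold Rdiv; ring).
  exact H6.
Qed.

Lemma pow_lt_mono n w v : 0 < w < v -> w^(S n) < v^(S n).
Proof. intros H. induction n as [|n IH].
  - simpl. lra.
  - assert (0 < w^(S n)) by (apply pow_lt; lra).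
    change (w * w^(S n) < v * v^(S n)). nra. Qed.

Lemma PP_decr r c K w v : 1 < r -> 0 <= c <= 1 -> 3*r <= K -> 0 < w < v ->
  PP r c K v < PP r c K w.
Proof.
  intros Hr Hc HK Hwv.
  set (a1 := c*r*(r^2-1)*(9*r^2-1-4*r*K)).
  set (a2 := 4*r^2*(1+r^2)+12*r^2*c^2*(r^2-1)-4*r*K*(2*r^2+c^2*(r^2-1))).
  set (a3 := c*(K*(1-13*r^2)+2*r-4*r*c^2+10*r^3+4*r^3*c^2)).
  set (a4 := 2*r*(1+2*c^2)*(r-K)).
  set (a5 := c*(r-K)).
  assert (h1 : a1 <= 0).
  { unfold a1. assert (0 <= c*r*(r^2-1)) by (apply Rmult_le_pos; [apply Rmult_le_pos|]; nra).
    assert (9*r^2-1-4*r*K <= 0) by nra. nra. }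
  assert (h2 : a2 < 0).
  { unfold a2. assert (0 <= c^2*(r^2-1)) by (apply Rmult_le_pos; nra).
    assert (0 <= (K-3*r)*(4*r*(2*r^2+c^2*(r^2-1)))) by (apply Rmult_le_pos; nra).
    assert (4*r*K*(2*r^2+c^2*(r^2-1)) >= 12*r^2*(2*r^2+c^2*(r^2-1))) by nra.
    assert (4*r^2*(1+r^2)+12*r^2*c^2*(r^2-1) - 12*r^2*(2*r^2+c^2*(r^2-1)) = 4*r^2*(1-5*r^2)) by ring.
    assert (1 < r^2) by (replace (r^2) with (r*r) by ring; nra).
    assert (4*r^2*(1-5*r^2) < 0) by nra. lra. }
  assert (h3 : a3 <= 0).
  { unfold a3.
    assert (Hr2 : 1 < r^2) by (replace (r^2) with (r*r) by ring; nra).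
    assert (Hr3 : r^3 = r*r^2) by ring.
    assert (0 <= (K-3*r)*(13*r^2-1)) by (apply Rmult_le_pos; nra).
    assert (0 <= 4*r*(r^2-1)*(1-c^2)) by (apply Rmult_le_pos; [apply Rmult_le_pos|]; nra).
    assert (K*(1-13*r^2)+2*r-4*r*c^2+10*r^3+4*r^3*c^2 <= 0).
    { assert (r < r^3) by nra. nra. }
    assert (0 <= c) by lra.
    destruct (Rle_lt_or_eq_dec 0 c ltac:(lra)) as [Hc0|Hc0]; [nra|rewrite <- Hc0; lra]. }
  assert (h4 : a4 <= 0).
  { unfold a4. assert (0 <= 2*r*(1+2*c^2)) by nra. nra. }
  assert (h5 : a5 <= 0). { unfold a5. nra. }
  assert (e : PP r c K v - PP r c K w = a1*(v-w) + a2*(v^2-w^2) + a3*(v^3-w^3) + a4*(v^4-w^4) + a5*(v^5-w^5)).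
  { unfold PP, a1, a2, a3, a4, a5. ring. }
  pose proof (pow_lt_mono 1 w v Hwv). pose proof (pow_lt_mono 2 w v Hwv).
  pose proof (pow_lt_mono 3 w v Hwv). pose proof (pow_lt_mono 4 w v Hwv).
  assert (a1*(v-w) <= 0) by nra. assert (a2*(v^2-w^2) < 0) by nra.
  assert (a3*(v^3-w^3) <= 0) by nra. assert (a4*(v^4-w^4) <= 0) by nra.
  assert (a5*(v^5-w^5) <= 0) by nra. lra.
Qed.

Lemma PP_at_r r c K : 1 < r -> 0 <= c <= 1 -> 3*r <= K -> PP r c K r <= 0.
Proof.
  intros Hr Hc HK.
  set (a1 := c*r*(r^2-1)*(9*r^2-1-4*r*K)).
  set (a2 := 4*r^2*(1+r^2)+12*r^2*c^2*(r^2-1)-4*r*K*(2*r^2+c^2*(r^2-1))).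
  set (a3 := c*(K*(1-13*r^2)+2*r-4*r*c^2+10*r^3+4*r^3*c^2)).
  set (a4 := 2*r*(1+2*c^2)*(r-K)).
  set (a5 := c*(r-K)).
  assert (h1 : a1 <= 0).
  { unfold a1. assert (0 <= c*r*(r^2-1)) by (apply Rmult_le_pos; [apply Rmult_le_pos|]; nra).
    assert (9*r^2-1-4*r*K <= 0) by nra. nra. }
  assert (h2 : a2 <= 4*r^2*(1-5*r^2)).
  { unfold a2. assert (0 <= c^2*(r^2-1)) by (apply Rmult_le_pos; nra).
    assert (0 <= (K-3*r)*(4*r*(2*r^2+c^2*(r^2-1)))) by (apply Rmult_le_pos; nra).
    assert (4*r*K*(2*r^2+c^2*(r^2-1)) >= 12*r^2*(2*r^2+c^2*(r^2-1))) by nra.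
    assert (4*r^2*(1+r^2)+12*r^2*c^2*(r^2-1) - 12*r^2*(2*r^2+c^2*(r^2-1)) = 4*r^2*(1-5*r^2)) by ring.
    lra. }
  assert (h3 : a3 <= 0).
  { unfold a3.
    assert (Hr2 : 1 < r^2) by (replace (r^2) with (r*r) by ring; nra).
    assert (Hr3 : r^3 = r*r^2) by ring.
    assert (0 <= (K-3*r)*(13*r^2-1)) by (apply Rmult_le_pos; nra).
    assert (0 <= 4*r*(r^2-1)*(1-c^2)) by (apply Rmult_le_pos; [apply Rmult_le_pos|]; nra).
    assert (K*(1-13*r^2)+2*r-4*r*c^2+10*r^3+4*r^3*c^2 <= 0).
    { assert (r < r^3) by nra. nra. }
    assert (0 <= c) by lra.
    destruct (Rle_lt_or_eq_dec 0 c ltac:(lra)) as [Hc0|Hc0]; [nra|rewrite <- Hc0; lra]. }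
  assert (h4 : a4 <= 0).
  { unfold a4. assert (0 <= 2*r*(1+2*c^2)) by nra. nra. }
  assert (h5 : a5 <= 0). { unfold a5. nra. }
  assert (e : PP r c K r = 2*r^2*(r^2-1)^2 + a1*r + a2*r^2 + a3*r^3 + a4*r^4 + a5*r^5).
  { unfold PP, a1, a2, a3, a4, a5. ring. }
  assert (0 < r^3) by (apply pow_lt; lra). assert (0 < r^4) by (apply pow_lt; lra).
  assert (0 < r^5) by (apply pow_lt; lra).
  assert (a1*r <= 0) by nra. assert (a3*r^3 <= 0) by nra. assert (a4*r^4 <= 0) by nra.
  assert (a5*r^5 <= 0) by nra.
  assert (a2*r^2 <= 4*r^2*(1-5*r^2)*r^2) by nra.
  assert (2*r^2*(r^2-1)^2 + 4*r^2*(1-5*r^2)*r^2 <= 0).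
  { assert (0 < r^2) by nra. assert ((r^2-1)^2 <= r^4) by nra. nra. }
  lra.
Qed.

Lemma ln_le_m1 x : 0 < x -> ln x <= x - 1.
Proof. intros. pose proof (exp_ineq1_le (ln x)). rewrite exp_ln in H0; lra. Qed.

Lemma ln_mono x y : 0 < x -> x <= y -> ln x <= ln y.
Proof. intros. destruct (Rle_lt_or_eq_dec x y H0) as [h|h].
  - left. apply ln_increasing; lra.
  - subst; lra. Qed.

Lemma mvt_g r c K a b : 1 < r -> 0 <= c -> 0 < a < b ->
  exists xi, gg r c K b - gg r c K a = gp r c K xi * (b - a) /\ a < xi < b.
Proof.
  intros. apply MVT_cor2; [lra|]. intros t Ht. apply dgg; lra.
Qed.

Lemma gp_sign r c K t : 1 < r -> 0 <= c <= 1 -> 0 < t ->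
  (0 <= gp r c K t -> PP r c K t <= 0) /\ (PP r c K t < 0 -> 0 < gp r c K t).
Proof.
  intros Hr Hc Ht. rewrite gp_eq by lra.
  pose proof (Qk_pos (2*r) c t ltac:(lra) ltac:(lra) Ht).
  pose proof (Qk_pos (r+1) c t ltac:(lra) ltac:(lra) Ht).
  pose proof (Qk_pos (r-1) c t ltac:(lra) ltac:(lra) Ht).
  set (D := t * Qk (2*r) c t * Qk (r+1) c t * Qk (r-1) c t).
  assert (HD : 0 < D) by (unfold D; repeat apply Rmult_lt_0_compat; lra).
  split; intros H'.
  - unfold Rdiv in H'. destruct (Rle_or_lt (PP r c K t) 0) as [h|h]; [exact h|].
    exfalso. assert (0 < / D) by (apply Rinv_0_lt_compat; lra).
    assert (0 < PP r c K t * / D) by (apply Rmult_lt_0_compat; lra). nra.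
  - unfold Rdiv. assert (0 < / D) by (apply Rinv_0_lt_compat; lra).
    assert (PP r c K t * / D < 0) by nra. nra.
Qed.

Lemma gg_upper r c K u : 1 < r -> 0 <= c <= 1 -> 0 <= K -> 0 < u ->
  gg r c K u <= (4*r^2 + 4*r*u) / u^2.
Proof.
  intros Hr Hc HK Hu. unfold gg.
  pose proof (Qk_pos (2*r) c u ltac:(lra) ltac:(lra) Hu) as H1.
  pose proof (Qk_pos (r-1) c u ltac:(lra) ltac:(lra) Hu) as H3.
  assert (Hqp : Qk (r-1) c u <= Qk (r+1) c u).
  { unfold Qk. assert (0 <= c*u) by nra. nra. }
  pose proof (ln_mono _ _ H3 Hqp).
  assert (0 <= K * (ln (Qk (r + 1) c u) - ln (Qk (r - 1) c u))) by nra.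
  assert (Hu2 : 0 < u*u) by nra.
  assert (e : ln (Qk (2 * r) c u) - 2 * ln u = ln (Qk (2*r) c u * / (u*u))).
  { assert (0 < / (u*u)) by (apply Rinv_0_lt_compat; lra).
    rewrite (ln_mult _ _ H1 H2). rewrite (ln_Rinv _ Hu2). rewrite (ln_mult _ _ Hu Hu). ring. }
  assert (Hpos : 0 < Qk (2*r) c u * / (u*u)) by (apply Rmult_lt_0_compat; [exact H1|apply Rinv_0_lt_compat; exact Hu2]).
  pose proof (ln_le_m1 _ Hpos).
  assert (Qk (2*r) c u * / (u*u) - 1 <= (4*r^2 + 4*r*u) / u^2).
  { unfold Qk. replace ((2*r)^2 + 2*(2*r)*c*u + u^2) with (u*u + (4*r^2 + 4*r*c*u)) by ring.
    replace ((u * u + (4 * r ^ 2 + 4 * r * c * u)) * / (u * u) - 1) with ((4 * r ^ 2 + 4 * r * c * u) / (u*u)) by (field; lra).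
    replace (u^2) with (u*u) by ring.
    unfold Rdiv. apply Rmult_le_compat_r; [left; apply Rinv_0_lt_compat; lra|]. assert (0 <= r*u*(1-c)) by (apply Rmult_le_pos; [apply Rmult_le_pos|]; lra). nra. }
  lra.
Qed.

Lemma gg_small r c K : 1 < r -> 0 <= c <= 1 -> 0 <= K -> exists u, 0 < u /\ 0 < gg r c K u.
Proof.
  intros Hr Hc HK.
  set (C := ln (4*r^2) - K * (ln ((r+2)^2) - ln ((r-1)^2))).
  set (u := exp (- (Rabs C + 1))).
  assert (Hu : 0 < u) by apply exp_pos.
  assert (Hu1 : u <= 1).
  { unfold u. pose proof (Rabs_pos C).
    assert (exp (- (Rabs C + 1)) < exp 0) by (apply exp_increasing; lra).
    rewrite exp_0 in H0. lra. }
  exists u; split; [exact Hu|].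
  assert (Hlu : ln u = - (Rabs C + 1)) by (unfold u; apply ln_exp).
  unfold gg. rewrite Hlu.
  assert (ln (4*r^2) <= ln (Qk (2*r) c u)).
  { apply ln_mono; [nra|]. unfold Qk. assert (0 <= c*u) by nra. nra. }
  assert (ln ((r-1)^2) <= ln (Qk (r-1) c u)).
  { apply ln_mono; [nra|]. unfold Qk. assert (0 <= c*u) by nra. nra. }
  assert (ln (Qk (r+1) c u) <= ln ((r+2)^2)).
  { apply ln_mono; [apply Qk_pos; lra|]. unfold Qk. assert (c*u <= 1) by nra. nra. }
  assert (K * (ln (Qk (r+1) c u) - ln (Qk (r-1) c u)) <= K * (ln ((r+2)^2) - ln ((r-1)^2))).
  { apply Rmult_le_compat_l; lra. }
  pose proof (Rabs_pos C). pose proof (Rle_abs (-C)). rewrite Rabs_Ropp in H4. unfold C in *. clearbody u. set (A := Rabs _) in *. set (X := K * (ln ((r + 2) ^ 2) - ln ((r - 1) ^ 2))) in *. generalize dependent A. intros. lra.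
Qed.

Lemma key r c K w : 1 < r -> 0 <= c <= 1 -> 3*r <= K -> 0 < w -> PP r c K w <= 0 ->
  forall v, w < v -> gg r c K v < 0.
Proof.
  intros Hr Hc HK Hw HP.
  assert (Hgp : forall t, w < t -> 0 < gp r c K t).
  { intros t Ht. apply (gp_sign r c K t Hr Hc ltac:(lra)).
    pose proof (PP_decr r c K w t Hr Hc HK ltac:(lra)). lra. }
  assert (Hinc : forall a b, w < a < b -> gg r c K a < gg r c K b).
  { intros a b Hab. destruct (mvt_g r c K a b Hr ltac:(lra) ltac:(lra)) as [xi [e Hxi]].
    pose proof (Hgp xi ltac:(lra)). assert (0 < gp r c K xi * (b-a)) by (apply Rmult_lt_0_compat; lra).
    lra. }
  intros v Hv. destruct (Rlt_or_le (gg r c K v) 0) as [h|h]; [exact h|exfalso].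
  set (e := gg r c K (v+1)).
  assert (He : 0 < e) by (pose proof (Hinc v (v+1) ltac:(lra)); unfold e; lra).
  set (V := v + 2 + (4*r^2+4*r)/e).
  assert (0 <= (4*r^2+4*r)/e) by (unfold Rdiv; apply Rmult_le_pos; [nra|left; apply Rinv_0_lt_compat; lra]).
  assert (HV1 : 1 <= V) by (unfold V; lra).
  pose proof (Hinc (v+1) V ltac:(unfold V; lra)).
  pose proof (gg_upper r c K V Hr Hc ltac:(lra) ltac:(lra)).
  assert ((4*r^2 + 4*r*V) / V^2 <= (4*r^2+4*r)/V).
  { replace (V^2) with (V*V) by ring. apply Rmult_le_reg_r with (V*V); [nra|].
    unfold Rdiv. rewrite Rmult_assoc, Rinv_l by nra.
    replace ((4 * r ^ 2 + 4 * r) * / V * (V * V)) with ((4 * r ^ 2 + 4 * r) * V) by (field; lra).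
    assert (0 <= r^2) by nra. nra. }
  assert ((4*r^2+4*r)/V < e).
  { apply Rmult_lt_reg_r with V; [lra|]. unfold Rdiv. rewrite Rmult_assoc, Rinv_l by lra.
    assert ((4*r^2+4*r)/e < V) by (unfold V; lra).
    apply Rmult_lt_reg_r with (/ e); [apply Rinv_0_lt_compat; lra|].
    replace (e * V * / e) with V by (field; lra). unfold Rdiv in H3. lra. }
  unfold e in *. lra.
Qed.

Lemma no_up r c K a b : 1 < r -> 0 <= c <= 1 -> 3*r <= K -> 0 < a < b ->
  gg r c K a <= gg r c K b -> gg r c K b < 0.
Proof.
  intros Hr Hc HK Hab Hle.
  destruct (mvt_g r c K a b Hr ltac:(lra) Hab) as [xi [e Hxi]].
  assert (0 <= gp r c K xi).
  { destruct (Rle_or_lt 0 (gp r c K xi)) as [h|h]; [exact h|].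
    assert (gp r c K xi * (b - a) < 0) by (apply Rmult_neg_pos; lra). lra. }
  apply (key r c K xi Hr Hc HK ltac:(lra)).
  - apply (proj1 (gp_sign r c K xi Hr Hc ltac:(lra))); exact H.
  - lra.
Qed.

Lemma gg_main r c K : 1 < r -> 0 <= c <= 1 -> 3*r <= K ->
  exists u0 : R, 0 < u0 /\ gg r c K u0 = 0 /\
    (forall u : R, 0 < u -> gg r c K u = 0 -> u = u0) /\
    (forall u : R, 0 < u < u0 -> gg r c K u > 0) /\
    (forall u : R, u > u0 -> gg r c K u < 0).
Proof.
  intros Hr Hc HK.
  destruct (gg_small r c K Hr Hc ltac:(lra)) as [us [Hus Hgs]].
  pose proof (key r c K r Hr Hc HK ltac:(lra) (PP_at_r r c K Hr Hc HK)) as Hbig.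
  set (ub := us + r + 1).
  assert (Hgb : gg r c K ub < 0) by (apply Hbig; unfold ub; lra).
  assert (Hcont : forall a, us <= a <= ub -> continuity_pt (opp_fct (gg r c K)) a).
  { intros a Ha. apply continuity_pt_opp. apply derivable_continuous_pt.
    exists (gp r c K a). apply dgg; lra. }
  destruct (IVT_interv (opp_fct (gg r c K)) us ub Hcont ltac:(unfold ub; lra)
     ltac:(unfold opp_fct; lra) ltac:(unfold opp_fct; lra)) as [u0 [Hu0 Hz]].
  unfold opp_fct in Hz.
  assert (Hz0 : gg r c K u0 = 0) by lra.
  assert (Hu0p : 0 < u0) by lra.
  assert (Hleft : forall u, 0 < u < u0 -> gg r c K u > 0).
  { intros u Hu. destruct (Rlt_or_le 0 (gg r c K u)) as [h|h]; [lra|].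
    pose proof (no_up r c K u u0 Hr Hc HK Hu ltac:(lra)). lra. }
  assert (Hright : forall u, u > u0 -> gg r c K u < 0).
  { intros u Hu. destruct (Rlt_or_le (gg r c K u) 0) as [h|h]; [lra|].
    apply (no_up r c K u0 u Hr Hc HK ltac:(lra) ltac:(lra)). }
  exists u0. split; [lra|]. split; [exact Hz0|]. split; [|split; assumption].
  intros u Hu Hgu. destruct (Rtotal_order u u0) as [h|[h|h]].
  - pose proof (Hleft u ltac:(lra)). lra.
  - exact h.
  - pose proof (Hright u h). lra.
Qed.

Lemma ln_sqrt' x : 0 < x -> ln (sqrt x) = ln x / 2.
Proof.
  intros Hx. pose proof (sqrt_lt_R0 x Hx).
  assert (ln x = ln (sqrt x * sqrt x)) by (rewrite sqrt_sqrt; lra).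
  rewrite ln_mult in H0 by lra. lra.
Qed.

Lemma Phi_eq d a b theta u : (0 < d)%nat -> (0 < b)%nat -> 0 <= cos theta -> 0 < u ->
  Phi_ray d a b theta u = INR d / 2 * gg (r_of d b) (cos theta) (R_of d a) u.
Proof.
  intros Hd Hb Hc Hu.
  assert (Hd' : 0 < INR d) by (apply lt_0_INR; lia).
  assert (Hb' : 0 < INR b) by (apply lt_0_INR; lia).
  assert (Hr : 1 < r_of d b).
  { unfold r_of. apply Rmult_lt_reg_r with (INR d); [lra|].
    unfold Rdiv; rewrite Rmult_assoc, Rinv_l by lra. lra. }
  set (r := r_of d b) in *. set (c := cos theta) in *.
  assert (Hs : sin theta ^ 2 = 1 - c^2).
  { pose proof (sin2_cos2 theta). unfold Rsqr in H. unfold c. simpl. lra. }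
  unfold Phi_ray, Phi, cmod. fold r.
  replace ((r + u * cos theta + r) ^ 2 + (u * sin theta) ^ 2) with (Qk (2*r) c u)
    by (unfold Qk, c; replace ((u * sin theta)^2) with (u^2 * sin theta^2) by ring; rewrite Hs; unfold c; ring).
  replace ((r + u * cos theta - r) ^ 2 + (u * sin theta) ^ 2) with (u^2)
    by (replace ((u * sin theta)^2) with (u^2 * sin theta^2) by ring; rewrite Hs; unfold c; ring).
  replace ((r + u * cos theta - 1) ^ 2 + (u * sin theta) ^ 2) with (Qk (r-1) c u)
    by (unfold Qk, c; replace ((u * sin theta)^2) with (u^2 * sin theta^2) by ring; rewrite Hs; unfold c; ring).
  replace ((r + u * cos theta + 1) ^ 2 + (u * sin theta) ^ 2) with (Qk (r+1) c u)
    by (unfold Qk, c; replace ((u * sin theta)^2) with (u^2 * sin theta^2) by ring; rewrite Hs; unfold c; ring).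
  rewrite sqrt_pow2 by lra.
  rewrite !ln_sqrt' by (apply Qk_pos; lra).
  assert (HK : INR a + INR d = INR d * R_of d a) by (unfold R_of; field; lra).
  rewrite HK. unfold gg. field.
Qed.

Theorem lemma4p6 (d a b : nat) (hd : (0 < d)%nat) (ha : (0 < a)%nat) (hb : (0 < b)%nat)
  (hR : R_of d a >= 3 * r_of d b) :
  forall theta : R, 0 <= theta <= PI / 2 ->
  exists u0 : R, 0 < u0 /\ Phi_ray d a b theta u0 = 0 /\
    (forall u : R, 0 < u -> Phi_ray d a b theta u = 0 -> u = u0) /\
    (forall u : R, 0 < u < u0 -> Phi_ray d a b theta u > 0) /\
    (forall u : R, u > u0 -> Phi_ray d a b theta u < 0).
Proof.
  intros theta Ht.
  assert (Hd' : 0 < INR d) by (apply lt_0_INR; lia).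
  assert (Hb' : 0 < INR b) by (apply lt_0_INR; lia).
  assert (Hr : 1 < r_of d b).
  { unfold r_of. apply Rmult_lt_reg_r with (INR d); [lra|].
    unfold Rdiv; rewrite Rmult_assoc, Rinv_l by lra. lra. }
  assert (Hc : 0 <= cos theta <= 1).
  { split; [apply cos_ge_0; pose proof PI_RGT_0; lra | apply COS_bound]. }
  destruct (gg_main (r_of d b) (cos theta) (R_of d a) Hr Hc ltac:(lra))
    as [u0 [Hu0 [Hz [Huniq [Hl Hrt]]]]].
  assert (Hd2 : 0 < INR d / 2) by lra.
  exists u0. split; [exact Hu0|].
  split; [rewrite Phi_eq by (lia || lra); rewrite Hz; ring|].
  split; [|split].
  - intros u Hu HP. rewrite Phi_eq in HP by (lia || lra). apply Huniq; [exact Hu|].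
    apply Rmult_integral in HP. destruct HP; lra.
  - intros u Hu. rewrite Phi_eq by (lia || lra). pose proof (Hl u Hu).
    apply Rlt_gt, Rmult_lt_0_compat; lra.
  - intros u Hu. rewrite Phi_eq by (lia || lra). pose proof (Hrt u Hu).
    assert (0 < INR d / 2 * - gg (r_of d b) (cos theta) (R_of d a) u) by (apply Rmult_lt_0_compat; lra).
    lra.
Qed.
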